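(* Let $Y$ be a latent label taking one of two values $y_1, y_2$ in a label space $\mathcal{Y}$, with known class probability $p = P(Y = y_1)$, and let $g:\mathcal{Y}\to\{\pm1\}^d$ be an isometric injective embedding. Let $\lambda^a,\lambda^b,\lambda^c$ be any three labeling functions (random elements of $\mathcal{Y}$) that are conditionally independent given $Y$, and suppose $n$ i.i.d. samples of $(\lambda^a,\lambda^b,\lambda^c)$ are observed ($Y$ is not observed). Assume the signs (i.e. the correct root of the quadratic) can be correctly recovered. Then for any $\delta>0$, with probability at least $1-\delta$, the quadratic triplet method recovers $\alpha_i = P(g(\lambda^a)_i=1\mid Y=y)$, $\beta_i = P(g(\lambda^b)_i=1\mid Y=y)$, $\gamma_i = P(g(\lambda^c)_i=1\mid Y=y)$ up to error $O\big((\ln(2d^2/\delta)/(2n))^{1/4}\big)$, simultaneously for all $i\in[d]$.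
   Context: Quadratic triplet method: for each coordinate $i\in[d]$, form the empirical frequencies $\hat O_{a,b}=\hat P(g(\lambda^a)_i=1,g(\lambda^b)_i=1)$, $\hat O_{a,c}$, $\hat O_{b,c}$ (defined analogously) and $\hat\ell_a=\hat P(g(\lambda^a)_i=1)$, $\hat\ell_b$, $\hat\ell_c$ from the $n$ samples. By conditional independence, the population quantities satisfy, with $y$ one of the two label values and $p'=P(Y=y)$, the system $O_{u,v} = p'\,\alpha^u\alpha^v + (1-p')\,\frac{\ell_u - p'\alpha^u}{1-p'}\cdot\frac{\ell_v-p'\alpha^v}{1-p'}$ for the three pairs $(u,v)\in\{(a,b),(a,c),(b,c)\}$, where $\alpha^a=\alpha_i,\alpha^b=\beta_i,\alpha^c=\gamma_i$ (using $P(g(\lambda^u)_i=1\mid Y\neq y)=(\ell_u-p'\alpha^u)/(1-p')$). The method plugs the empirical quantities into this system, eliminates two unknowns to obtain a single quadratic equation in one unknown, solves it by the quadratic formula (choosing the correct root), and back-substitutes to obtain estimates of $\alpha_i,\beta_i,\gamma_i$. *)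

(* Defs.v *)
From HB Require Import structures.
From mathcomp Require Import all_boot all_order all_algebra.
From mathcomp Require Import reals exp.
Set Implicit Arguments. Unset Strict Implicit. Unset Printing Implicit Defensive.
Import Order.TTheory GRing.Theory Num.Theory.
Local Open Scope ring_scope.

Section Defs.
Variables (R : realType) (L : finType).

(* A joint probability mass function J y a b c = P(Y=y, la=a, lb=b, lc=c).  *)
Definition is_pmf4 (J : L -> L -> L -> L -> R) : Prop :=
  (forall y a b c, 0 <= J y a b c) /\
  \sum_y \sum_a \sum_b \sum_c J y a b c = 1.

Definition Pr4 (J : L -> L -> L -> L -> R) (E : L -> L -> L -> L -> bool) : R :=
  \sum_y \sum_a \sum_b \sum_c (if E y a b c then J y a b c else 0).

Definition condPr4 (J : L -> L -> L -> L -> R) (E F : L -> L -> L -> L -> bool) : R :=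
  Pr4 J (fun y a b c => E y a b c && F y a b c) / Pr4 J F.

Definition margY (J : L -> L -> L -> L -> R) (y : L) : R := \sum_a \sum_b \sum_c J y a b c.
Definition margYa (J : L -> L -> L -> L -> R) (y a : L) : R := \sum_b \sum_c J y a b c.
Definition margYb (J : L -> L -> L -> L -> R) (y b : L) : R := \sum_a \sum_c J y a b c.
Definition margYc (J : L -> L -> L -> L -> R) (y c : L) : R := \sum_a \sum_b J y a b c.

(* la, lb, lc conditionally independent given Y:
   P(a,b,c | y) = P(a|y) P(b|y) P(c|y), multiplied out by P(Y=y)^3. *)
Definition cond_indep3 (J : L -> L -> L -> L -> R) : Prop :=
  forall y a b c,
    J y a b c * margY J y ^+ 2 = margYa J y a * margYb J y b * margYc J y c.

Definition obsLaw (J : L -> L -> L -> L -> R) (t : L * L * L) : R := \sum_y J y t.1.1 t.1.2 t.2.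

Definition PrSample (J : L -> L -> L -> L -> R) (n : nat) (E : {ffun 'I_n -> L * L * L} -> bool) : R :=
  \sum_(s : {ffun 'I_n -> L * L * L} | E s) \prod_(k < n) obsLaw J (s k).

(* ---------- embedding into {+-1}^d  (true encodes +1, false encodes -1) --- *)
Definition hamming d (u v : {ffun 'I_d -> bool}) : nat :=
  #|[set i | u i != v i]|.

Definition isometric_embedding d (dist : L -> L -> R)
    (g : L -> {ffun 'I_d -> bool}) : Prop :=
  injective g /\ forall x y, dist x y = (hamming (g x) (g y))%:R.

Definition pa (t : L * L * L) : L := t.1.1.
Definition pb (t : L * L * L) : L := t.1.2.
Definition pc (t : L * L * L) : L := t.2.

Definition lhat d (g : L -> {ffun 'I_d -> bool}) n
    (s : {ffun 'I_n -> L * L * L}) (pu : L * L * L -> L) (i : 'I_d) : R :=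
  (\sum_(k < n) (g (pu (s k)) i)%:R) / n%:R.

Definition Ohat d (g : L -> {ffun 'I_d -> bool}) n
    (s : {ffun 'I_n -> L * L * L}) (pu pv : L * L * L -> L) (i : 'I_d) : R :=
  (\sum_(k < n) (g (pu (s k)) i && g (pv (s k)) i)%:R) / n%:R.

(* Plugging empirical values into
     O_uv = p' x_u x_v + (1-p') (l_u - p' x_u)/(1-p') (l_v - p' x_v)/(1-p')
   gives  (1-p')/p' (O_uv - l_u l_v) = (x_u - l_u)(x_v - l_v) =: K_uv. *)
Definition Khat d (g : L -> {ffun 'I_d -> bool}) n (s : {ffun 'I_n -> L * L * L}) (pu pv : L * L * L -> L) (pp : R) (i : 'I_d) : R :=
  (1 - pp) / pp * (Ohat g s pu pv i - lhat g s pu i * lhat g s pv i).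

(* Eliminating x_b, x_c yields the quadratic in x_a
     x_a^2 - 2 l_a x_a + (l_a^2 - K_ab K_ac / K_bc) = 0,
   solved by the quadratic formula with root choice sgn (= +1 or -1). *)
Definition alpha_hat d (g : L -> {ffun 'I_d -> bool}) n (s : {ffun 'I_n -> L * L * L}) (pp : R) (sgn : 'I_d -> R) (i : 'I_d) : R :=
  let la := lhat g s pa i in
  let ch := Khat g s pa pb pp i * Khat g s pa pc pp i / Khat g s pb pc pp i in
  let qa : R := 1 in
  let qb : R := - (2 * la) in
  let qc : R := la ^+ 2 - ch in
  (- qb + sgn i * Num.sqrt (qb ^+ 2 - 4 * qa * qc)) / (2 * qa).

Definition beta_hat d (g : L -> {ffun 'I_d -> bool}) n (s : {ffun 'I_n -> L * L * L}) (pp : R) (sgn : 'I_d -> R) (i : 'I_d) : R :=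
  lhat g s pb i
  + Khat g s pa pb pp i / (@alpha_hat d g n s pp sgn i - lhat g s pa i).

Definition gamma_hat d (g : L -> {ffun 'I_d -> bool}) n (s : {ffun 'I_n -> L * L * L}) (pp : R) (sgn : 'I_d -> R) (i : 'I_d) : R :=
  lhat g s pc i
  + Khat g s pa pc pp i / (@alpha_hat d g n s pp sgn i - lhat g s pa i).

End Defs.

(* Main.v *)
Require Import Defs.
From HB Require Import structures.
From mathcomp Require Import all_boot all_order all_algebra.
From mathcomp Require Import reals exp sequences.
From mathcomp Require Import ring lra.
Import Order.TTheory GRing.Theory Num.Theory.
Local Open Scope ring_scope.

Section Reals.
Variable R : realType.
Implicit Types a b x e : R.

Lemma sqrt_sub_le a b : `|Num.sqrt a - Num.sqrt b| <= Num.sqrt `|a - b|.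
Proof.
have sa := sqrtr_ge0 a; have sb := sqrtr_ge0 b.
have key : (Num.sqrt a - Num.sqrt b) ^+ 2 <= `|a - b|.
  have h1 : (Num.sqrt a - Num.sqrt b) ^+ 2 <= `|Num.sqrt a ^+ 2 - Num.sqrt b ^+ 2|.
    rewrite subr_sqr normrM.
    have: `|Num.sqrt a - Num.sqrt b| <= `|Num.sqrt a + Num.sqrt b|.
      rewrite (ger0_norm (addr_ge0 sa sb)).
      rewrite ler_norml; apply/andP; split; lra.
    move=> h.
    have -> : (Num.sqrt a - Num.sqrt b) ^+ 2 = `|Num.sqrt a - Num.sqrt b| ^+ 2.
      by rewrite -normrX ger0_norm ?sqr_ge0.
    by rewrite expr2 ler_wpM2l ?normr_ge0.
  apply: (le_trans h1).
  case: (lerP 0 a) => ha; case: (lerP 0 b) => hb.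
  - by rewrite !sqr_sqrtr.
  - rewrite sqr_sqrtr // (ler0_sqrtr (ltW hb)) expr0n /= subr0 !ger0_norm //; lra.
  - rewrite (ler0_sqrtr (ltW ha)) sqr_sqrtr // expr0n /= sub0r normrN.
    rewrite [`|b|]ger0_norm // ler0_norm; lra.
  - by rewrite (ler0_sqrtr (ltW ha)) (ler0_sqrtr (ltW hb)) expr0n /= subrr normr0 normr_ge0.
rewrite -(sqrtr_sqr (Num.sqrt a - Num.sqrt b)).
by rewrite ler_sqrt ?normr_ge0.
Qed.

Lemma expR_le_quad x : `|x| <= 1/2 -> expR x <= 1 + x + 2 * x ^+ 2.
Proof.
move=> hx.
have [hx1 hx2] : -(1/2) <= x /\ x <= 1/2 by move: hx; rewrite ler_norml => /andP[].
have h := expR_ge1Dx (- x).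
rewrite expRN in h.
have ep := expR_gt0 x.
have h2 : expR x * (1 - x) <= 1.
  have := ler_wpM2l (ltW ep) h. rewrite mulfV ?gt_eqF //.
have hq : 1 <= (1 - x) * (1 + x + 2 * x ^+ 2).
  have : 0 <= x ^+ 2 * (1 - 2 * x) by apply: mulr_ge0; [exact: sqr_ge0 | lra].
  move=> H; rewrite expr2 in H *; nra.
have p1 : 0 < 1 - x by lra.
rewrite -(ler_pM2r p1); apply: (le_trans h2); by rewrite mulrC.
Qed.

End Reals.
Arguments sqrt_sub_le {R}.
Arguments expR_le_quad {R}.
Section Hold.
Variable R : realType.
Variable V : Type.
Variable close : R -> V -> Prop.
Variable r : R -> R.
Hypothesis r_ge0 : forall e, 0 < e -> 0 <= r e.
Hypothesis r_small : forall m, 0 < m -> exists e1, 0 < e1 /\ forall e, 0 < e -> e <= e1 -> r e <= m.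

Definition hold (f : V -> R) (x : R) := exists K e0, 0 < K /\ 0 < e0 /\
  forall e v, 0 < e -> e <= e0 -> close e v -> `|f v - x| <= K * r e.

Lemma hold_ext f g x y : (forall v, f v = g v) -> x = y -> hold f x -> hold g y.
Proof.
move=> fg <- [K [e0 [K0 [e00 H]]]]; exists K, e0; split=> // ; split=> // e v he he0 hc.
by rewrite -fg; apply: H.
Qed.

Lemma hold_const c : hold (fun _ => c) c.
Proof.
exists 1, 1; split=> //; split=> // e v he _ _; rewrite subrr normr0 mul1r; exact: r_ge0.
Qed.

Lemma min_pos {a b : R} : 0 < a -> 0 < b -> 0 < Num.min a b /\ Num.min a b <= a /\ Num.min a b <= b.
Proof.
move=> ha hb; split; first by rewrite lt_min ha hb.
by rewrite ge_min lexx /= ge_min lexx orbT.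
Qed.

Lemma hold_add f g x y : hold f x -> hold g y -> hold (fun v => f v + g v) (x + y).
Proof.
move=> [K1 [e1 [K10 [e10 H1]]]] [K2 [e2 [K20 [e20 H2]]]].
have [m0 [m1 m2]] := min_pos e10 e20.
exists (K1 + K2), (Num.min e1 e2); split; first by rewrite addr_gt0.
split=> // e v he he0 hc.
have h1 := H1 e v he (le_trans he0 m1) hc.
have h2 := H2 e v he (le_trans he0 m2) hc.
have -> : f v + g v - (x + y) = (f v - x) + (g v - y) by ring.
apply: (le_trans (ler_normD _ _)); rewrite mulrDl; exact: lerD.
Qed.

Lemma hold_opp f x : hold f x -> hold (fun v => - f v) (- x).
Proof.
move=> [K1 [e1 [K10 [e10 H1]]]]; exists K1, e1; split=> //; split=> // e v he he0 hc.
by rewrite -opprD normrN; apply: H1.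
Qed.

Lemma hold_mul f g x y : hold f x -> hold g y -> hold (fun v => f v * g v) (x * y).
Proof.
move=> [K1 [e1 [K10 [e10 H1]]]] [K2 [e2 [K20 [e20 H2]]]].
have [e3 [e30 H3]] := @r_small 1 ltr01.
have [m0 [m1 m2]] := min_pos e10 e20.
have [m0' [m1' m2']] := min_pos m0 e30.
exists (K1 * (`|y| + K2) + `|x| * K2 + 1), (Num.min (Num.min e1 e2) e3).
split.
  apply: ltr_wpDl; last exact: ltr01.
  have := normr_ge0 x; have := normr_ge0 y => hy hx.
  apply: addr_ge0; apply: mulr_ge0 => //; try lra.
split=> // e v he he0 hc.
have h1 := H1 e v he (le_trans he0 (le_trans m1' m1)) hc.
have h2 := H2 e v he (le_trans he0 (le_trans m1' m2)) hc.
have h3 := H3 e he (le_trans he0 m2').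
have hr := r_ge0 _ he.
have -> : f v * g v - x * y = (f v - x) * g v + x * (g v - y) by ring.
apply: (le_trans (ler_normD _ _)); rewrite !normrM.
have hg : `|g v| <= `|y| + K2.
  have : `|g v| <= `|y| + `|g v - y|.
    by have := ler_normD y (g v - y); rewrite addrC subrK.
  move=> h; apply: (le_trans h); rewrite lerD2l.
  apply: (le_trans h2); rewrite -[X in _ <= X]mulr1 ler_pM2l //.
have hA : `|f v - x| * `|g v| <= K1 * r e * (`|y| + K2).
  exact: (ler_pM (normr_ge0 _) (normr_ge0 _) h1 hg).
have hB : `|x| * `|g v - y| <= `|x| * (K2 * r e) by exact: (ler_wpM2l (normr_ge0 x) h2).
have hC : 0 <= r e := hr.
have : K1 * r e * (`|y| + K2) + `|x| * (K2 * r e) <= (K1 * (`|y| + K2) + `|x| * K2 + 1) * r e.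
  rewrite !mulrDl mul1r -!mulrA [r e * (_ + _)]mulrC [K2 * r e]mulrC mulrA mulrA.
  by rewrite -mulrA lerDl.
move=> h; apply: le_trans h; exact: lerD.
Qed.

Lemma hold_inv f x : x != 0 -> hold f x -> hold (fun v => (f v)^-1) x^-1.
Proof.
move=> x0 [K1 [e1 [K10 [e10 H1]]]].
have ax : 0 < `|x| by rewrite normr_gt0.
have [e3 [e30 H3]] := r_small _ (divr_gt0 ax (mulr_gt0 (ltr0n _ 2) K10)).
have [m0 [m1 m2]] := min_pos e10 e30.
exists (2 * K1 / (`|x| ^+ 2)), (Num.min e1 e3).
split; first by rewrite divr_gt0 ?mulr_gt0 ?exprn_gt0.
split=> // e v he he0 hc.
have h1 := H1 e v he (le_trans he0 m1) hc.
have h3 := H3 e he (le_trans he0 m2).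
have hr := r_ge0 _ he.
have hd : `|f v - x| <= `|x| / 2.
  apply: (le_trans h1).
  have := ler_wpM2l (ltW K10) h3.
  have -> : K1 * (`|x| / (2 * K1)) = `|x| / 2 by field; rewrite gt_eqF.
  done.
have hf : `|x| / 2 <= `|f v|.
  have : `|x| <= `|f v| + `|x - f v| by have := ler_normD (f v) (x - f v); rewrite addrC subrK.
  rewrite distrC; lra.
have fv0 : 0 < `|f v| by apply: lt_le_trans hf; rewrite divr_gt0.
have fnz : f v != 0 by rewrite -normr_gt0.
have -> : (f v)^-1 - x^-1 = (x - f v) / (f v * x) by field; rewrite fnz x0.
rewrite normrM normfV normrM distrC.
rewrite mulrC ler_pdivrMl ?mulr_gt0 //.
have : `|f v| * `|x| * (2 * K1 / `|x| ^+ 2 * r e) >= `|x| / 2 * `|x| * (2 * K1 / `|x| ^+ 2 * r e).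
  apply: ler_wpM2r; last by apply: ler_wpM2r => //; exact: ltW.
  by apply: mulr_ge0 => //; apply: mulr_ge0; rewrite ?mulr_ge0 ?invr_ge0 ?exprn_ge0 ?ltW.
have -> : `|x| / 2 * `|x| * (2 * K1 / `|x| ^+ 2 * r e) = K1 * r e.
  by field; rewrite gt_eqF.
move=> h; exact: le_trans h1 h.
Qed.

End Hold.
Arguments hold {R V}.
Arguments min_pos {R a b}.
Arguments hold_ext {R V close r f g x y}.
Arguments hold_add {R V close r f g x y}.
Arguments hold_opp {R V close r f x}.
Arguments hold_mul {R V close r} _ _ [f g x y].
Arguments hold_inv {R V close r} _ _ [f x].

Section HoldR.
Variable R : realType.
Variable V : Type.
Variable close : R -> V -> Prop.

Lemma rid_ge0 : forall e : R, 0 < e -> 0 <= e.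
Proof. by move=> e /ltW. Qed.
Lemma rid_small : forall m : R, 0 < m -> exists e1, 0 < e1 /\ forall e, 0 < e -> e <= e1 -> e <= m.
Proof. by move=> m m0; exists m; split. Qed.
Lemma rsq_ge0 : forall e : R, 0 < e -> 0 <= Num.sqrt e.
Proof. by move=> e _; exact: sqrtr_ge0. Qed.
Lemma rsq_small : forall m : R, 0 < m -> exists e1, 0 < e1 /\ forall e, 0 < e -> e <= e1 -> Num.sqrt e <= m.
Proof.
move=> m m0; exists (m ^+ 2); split; first by rewrite exprn_gt0.
move=> e e0 em; rewrite -(ger0_norm (ltW m0)) -sqrtr_sqr ler_sqrt //.
by rewrite exprn_ge0 // ltW.
Qed.

Lemma hold_proj (f : V -> R) x :
  (forall e v, 0 < e -> close e v -> `|f v - x| <= e) -> hold close (fun e => e) f x.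
Proof.
move=> H; exists 1, 1; split=> //; split=> // e v he _ hc; rewrite mul1r; exact: H.
Qed.

Lemma hold_id_sqrt (f : V -> R) x : hold close (fun e => e) f x -> hold close Num.sqrt f x.
Proof.
move=> [K [e0 [K0 [e00 H]]]].
have [m0 [m1 m2]] := min_pos e00 (@ltr01 R).
exists K, (Num.min e0 1); split=> //; split=> // e v he he0 hc.
apply: (le_trans (H e v he (le_trans he0 m1) hc)).
rewrite ler_pM2l //.
have e1 : e <= 1 := le_trans he0 m2.
have s1 : Num.sqrt e <= 1 by rewrite -sqrtr1 ler_sqrt.
have s0 := sqrtr_ge0 e.
rewrite -{1}(sqr_sqrtr (ltW he)) expr2.
by rewrite -[X in _ <= X]mulr1 ler_pM2l ?sqrtr_gt0.
Qed.

Lemma hold_sqrt (f : V -> R) x : hold close (fun e => e) f x ->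
  hold close Num.sqrt (fun v => Num.sqrt (f v)) (Num.sqrt x).
Proof.
move=> [K [e0 [K0 [e00 H]]]].
exists (Num.sqrt K), e0; split; first by rewrite sqrtr_gt0.
split=> // e v he he0 hc.
apply: (le_trans (sqrt_sub_le _ _)).
rewrite -(sqrtrM e (ltW K0)) ler_sqrt; last by rewrite mulr_ge0 // ltW.
exact: H.
Qed.

End HoldR.
Arguments hold_proj {R V close f x}.
Arguments hold_id_sqrt {R V close f x}.
Arguments hold_sqrt {R V close f x}.

Definition alpha_f (R : realType) (la kab kac kbc sg : R) : R :=
  let ch := kab * kac / kbc in
  let qa : R := 1 in
  let qb : R := - (2 * la) in
  let qc : R := la ^+ 2 - ch in
  (- qb + sg * Num.sqrt (qb ^+ 2 - 4 * qa * qc)) / (2 * qa).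

Definition Kfun (R : realType) (pp o l1 l2 : R) : R := (1 - pp) / pp * (o - l1 * l2).
Arguments alpha_f {R}. Arguments Kfun {R}.

Lemma alpha_fE (R : realType) (la kab kac kbc sg : R) :
  alpha_f la kab kac kbc sg = la + sg * Num.sqrt (kab * kac / kbc).
Proof.
rewrite /alpha_f.
have -> : (- (2 * la)) ^+ 2 - 4 * 1 * (la ^+ 2 - kab * kac / kbc) = 2 ^+ 2 * (kab * kac / kbc).
  by ring.
rewrite sqrtrM ?exprn_ge0 // sqrtr_sqr ger0_norm //.
by field.
Qed.

Arguments alpha_fE {R}.

Section Determ.
Variable R : realType.
Variable V : Type.
Variable close : R -> V -> Prop.

Let hI_c c := @hold_const R V close (fun e => e) (@rid_ge0 R) c.
Let hI_mul {f g : V -> R} {x y : R} := hold_mul (close:=close) (r:=fun e => e) (@rid_ge0 R) (@rid_small R) (f:=f) (g:=g) (x:=x) (y:=y).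
Let hI_inv {f : V -> R} {x : R} := hold_inv (close:=close) (r:=fun e => e) (@rid_ge0 R) (@rid_small R) (f:=f) (x:=x).
Let hS_mul {f g : V -> R} {x y : R} := hold_mul (close:=close) (r:=Num.sqrt) (@rsq_ge0 R) (@rsq_small R) (f:=f) (g:=g) (x:=x) (y:=y).
Let hS_inv {f : V -> R} {x : R} := hold_inv (close:=close) (r:=Num.sqrt) (@rsq_ge0 R) (@rsq_small R) (f:=f) (x:=x).
Let hS_c c := @hold_const R V close Num.sqrt (@rsq_ge0 R) c.

Lemma hK_gen pp (O L1 L2 : V -> R) o l1 l2 :
  hold close (fun e => e) O o -> hold close (fun e => e) L1 l1 -> hold close (fun e => e) L2 l2 ->
  hold close (fun e => e) (fun v => Kfun pp (O v) (L1 v) (L2 v)) (Kfun pp o l1 l2).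
Proof.
move=> hO h1 h2.
exact: (hI_mul (hI_c _) (hold_add hO (hold_opp (hI_mul h1 h2)))).
Qed.

Variables (La Lb Lc Oab Oac Obc : V -> R) (la lb lc oab oac obc pp sg xa xb xc : R).
Hypothesis hc : forall e v, 0 < e -> close e v ->
  `|La v - la| <= e /\ `|Lb v - lb| <= e /\ `|Lc v - lc| <= e /\
      `|Oab v - oab| <= e /\ `|Oac v - oac| <= e /\ `|Obc v - obc| <= e.
Hypothesis eab : Kfun pp oab la lb = (xa - la) * (xb - lb).
Hypothesis eac : Kfun pp oac la lc = (xa - la) * (xc - lc).
Hypothesis ebc : Kfun pp obc lb lc = (xb - lb) * (xc - lc).
Hypothesis na : xa != la.
Hypothesis nb : xb != lb.
Hypothesis nc : xc != lc.
Hypothesis hsg : sg = 1 \/ sg = -1.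
Hypothesis hsa : 0 < sg * (xa - la).

Let A v := alpha_f (La v) (Kfun pp (Oab v) (La v) (Lb v)) (Kfun pp (Oac v) (La v) (Lc v))
   (Kfun pp (Obc v) (Lb v) (Lc v)) sg.

Lemma determ :
  hold close Num.sqrt A xa /\
  hold close Num.sqrt (fun v => Lb v + Kfun pp (Oab v) (La v) (Lb v) / (A v - La v)) xb /\
  hold close Num.sqrt (fun v => Lc v + Kfun pp (Oac v) (La v) (Lc v) / (A v - La v)) xc.
Proof.
have hLa : hold close (fun e => e) La la by apply: hold_proj => e v he /(hc _ _ he); tauto.
have hLb : hold close (fun e => e) Lb lb by apply: hold_proj => e v he /(hc _ _ he); tauto.
have hLc : hold close (fun e => e) Lc lc by apply: hold_proj => e v he /(hc _ _ he); tauto.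
have hOab : hold close (fun e => e) Oab oab by apply: hold_proj => e v he /(hc _ _ he); tauto.
have hOac : hold close (fun e => e) Oac oac by apply: hold_proj => e v he /(hc _ _ he); tauto.
have hObc : hold close (fun e => e) Obc obc by apply: hold_proj => e v he /(hc _ _ he); tauto.
have hab := hK_gen pp _ _ _ _ _ _ hOab hLa hLb.
have hac := hK_gen pp _ _ _ _ _ _ hOac hLa hLc.
have hbc := hK_gen pp _ _ _ _ _ _ hObc hLb hLc.
have na' : xa - la != 0 by rewrite subr_eq0.
have nb' : xb - lb != 0 by rewrite subr_eq0.
have nc' : xc - lc != 0 by rewrite subr_eq0.
have kbc0 : Kfun pp obc lb lc != 0 by rewrite ebc mulf_neq0.
have hch := hI_mul (hI_mul hab hac) (hI_inv kbc0 hbc).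
have chE : Kfun pp oab la lb * Kfun pp oac la lc * (Kfun pp obc lb lc)^-1 = (xa - la) ^+ 2.
  by rewrite eab eac ebc; field; rewrite nb' nc'.
rewrite chE in hch.
have hsq := hold_sqrt hch.
rewrite sqrtr_sqr in hsq.
have sgabs : sg * `|xa - la| = xa - la.
  have := hsa; case: hsg => -> ; rewrite ?mul1r ?mulN1r => h.
    by rewrite gtr0_norm.
  by rewrite ltr0_norm ?opprK // -oppr_gt0.
have hD : hold close Num.sqrt (fun v => A v - La v) (xa - la).
  apply: (hold_ext _ _ (hS_mul (hS_c sg) hsq)) => [v|//].
  by rewrite /A alpha_fE; ring.
have hA : hold close Num.sqrt A xa.
  apply: (hold_ext _ _ (hold_add hD (hold_id_sqrt hLa))) => [v|]; ring.
split=> //.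
have hDi := hS_inv na' hD.
split.
  apply: (hold_ext _ _ (hold_add (hold_id_sqrt hLb) (hS_mul (hold_id_sqrt hab) hDi))) => [//|].
  by rewrite eab; field.
apply: (hold_ext _ _ (hold_add (hold_id_sqrt hLc) (hS_mul (hold_id_sqrt hac) hDi))) => [//|].
by rewrite eac; field.
Qed.

End Determ.

Section Prob.
Variable R : realType.
Variable T : finType.
Variable w : T -> R.
Hypothesis w0 : forall t, 0 <= w t.
Hypothesis w1 : \sum_t w t = 1.

Definition PS n (E : {ffun 'I_n -> T} -> bool) : R :=
  \sum_(s : {ffun 'I_n -> T} | E s) \prod_(k < n) w (s k).

Lemma PS_total n : \sum_(s : {ffun 'I_n -> T}) \prod_(k < n) w (s k) = 1.
Proof.
rewrite -(bigA_distr_bigA (fun (_ : 'I_n) t => w t)) /=.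
by rewrite (eq_bigr (fun _ => 1)) ?prodr_const ?expr1n // => k _; rewrite w1.
Qed.

Lemma PS_ge0 n E : 0 <= PS n E.
Proof. by apply: sumr_ge0 => s _; apply: prodr_ge0 => k _. Qed.

Lemma PS_compl n E : PS n E = 1 - PS n (fun s => ~~ E s).
Proof.
have : PS n E + PS n (fun s => ~~ E s) = 1.
  by rewrite /PS -[RHS](PS_total n) [RHS](bigID E) /=.
move=> <-; by rewrite addrK.
Qed.

Lemma PS_mono n (E F : {ffun 'I_n -> T} -> bool) :
  (forall s, E s -> F s) -> PS n E <= PS n F.
Proof.
move=> EF; rewrite /PS [X in _ <= X]big_mkcond [X in X <= _]big_mkcond /=.
apply: ler_sum => s _; case: (boolP (E s)) => Es; first by rewrite (EF _ Es).
by case: (F s) => //; apply: prodr_ge0.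
Qed.

Lemma PS_union n (E F : {ffun 'I_n -> T} -> bool) :
  PS n (fun s => E s || F s) <= PS n E + PS n F.
Proof.
rewrite /PS !(big_mkcond (fun s => _ || _)) (big_mkcond E) (big_mkcond F) /= -big_split /=.
apply: ler_sum => s _; have P0 : 0 <= \prod_(k < n) w (s k) by apply: prodr_ge0.
by case: (E s); case: (F s) => /=; rewrite ?addr0 ?add0r ?lerDl ?lexx.
Qed.

Lemma PS_exists n (I : finType) (B : I -> {ffun 'I_n -> T} -> bool) :
  PS n (fun s => [exists i, B i s]) <= \sum_i PS n (B i).
Proof.
rewrite /PS big_mkcond /=.
rewrite (eq_bigr (fun i => \sum_s (if B i s then \prod_(k < n) w (s k) else 0))); last first.
  by move=> i _; rewrite big_mkcond.
rewrite exchange_big /=; apply: ler_sum => s _.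
have P0 : 0 <= \prod_(k < n) w (s k) by apply: prodr_ge0.
case: (boolP [exists i, B i s]) => [/existsP [i Bi] | _].
  rewrite (bigD1 i) //= Bi lerDl; apply: sumr_ge0 => j _; by case: (B j s).
by apply: sumr_ge0 => j _; case: (B j s).
Qed.

Lemma PS_all_seq n (X : Type) (fs : seq X) (P : X -> {ffun 'I_n -> T} -> bool) (b : R) :
  (forall f, PS n (fun s => ~~ P f s) <= b) ->
  PS n (fun s => ~~ all (fun f => P f s) fs) <= (size fs)%:R * b.
Proof.
move=> H; elim: fs => [|f fs IH] /=.
  by rewrite mul0r /PS big_pred0.
apply: (le_trans (PS_mono n _ (fun s => ~~ P f s || ~~ all (fun f => P f s) fs) _)).
  by move=> s; rewrite negb_and.
apply: (le_trans (PS_union _ _ _)).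
rewrite -addn1 natrD mulrDl mul1r addrC; exact: lerD.
Qed.

Definition mu (f : T -> bool) : R := \sum_t w t * (f t)%:R.
Definition mean n (f : T -> bool) (s : {ffun 'I_n -> T}) : R := (\sum_(k < n) (f (s k))%:R) / n%:R.

Lemma mu_ge0 f : 0 <= mu f.
Proof. by apply: sumr_ge0 => t _; apply: mulr_ge0 => //; case: (f t). Qed.

Lemma mu_le1 f : mu f <= 1.
Proof.
rewrite -w1; apply: ler_sum => t _; rewrite -[X in _ <= X]mulr1; apply: ler_wpM2l => //.
by case: (f t).
Qed.

Lemma tail_up n f e : (0 < n)%N -> 0 < e -> e <= 1 ->
  PS n (fun s => mu f + e < mean n f s) <= expR (- (n%:R * e ^+ 2 / 8)).
Proof.
move=> n0 e0 e1.
set lam := e / 4.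
have lam0 : 0 < lam by rewrite divr_gt0.
have lam1 : lam <= 1/4 by rewrite /lam; lra.
set X := fun t => ((f t)%:R : R).
set G := fun t => w t * expR (lam * (X t - mu f - e)).
have G0 t : 0 <= G t by rewrite /G mulr_ge0 ?expR_ge0.
have step1 : PS n (fun s => mu f + e < mean n f s) <=
    \sum_(s : {ffun 'I_n -> T}) \prod_(k < n) G (s k).
  rewrite /PS big_mkcond /=; apply: ler_sum => s _.
  have PG : 0 <= \prod_(k < n) G (s k) by apply: prodr_ge0.
  case: ifP => // hE.
  rewrite /G big_split /= -expR_sum.
  rewrite -[X in X <= _]mulr1 ler_wpM2l ?prodr_ge0 //.
  rewrite -expR0 ler_expR -mulr_sumr mulr_ge0 ?ltW //.
  rewrite (eq_bigr (fun k => X (s k) - (mu f + e))); last by move=> k _; rewrite opprD addrA.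
  rewrite sumrB sumr_const card_ord -mulr_natl.
  rewrite subr_gt0.
  move: hE; rewrite /mean ltr_pdivlMr ?ltr0n //.
  by rewrite mulrC.
have step2 : \sum_(s : {ffun 'I_n -> T}) \prod_(k < n) G (s k) = (\sum_t G t) ^+ n.
  by rewrite -(bigA_distr_bigA (fun (_ : 'I_n) t => G t)) /= prodr_const card_ord.
have mu0 := mu_ge0 f; have mu1 := mu_le1 f.
have step3 : \sum_t G t <= expR (- (e ^+ 2 / 8)).
  have hz t : (lam * (X t - mu f)) ^+ 2 <= lam ^+ 2 /\ `|lam * (X t - mu f)| <= 1/2.
    have hX : `|X t - mu f| <= 1.
      by rewrite /X; case: (f t) => /=; rewrite ler_norml; apply/andP; split; lra.
    have hX2 : (X t - mu f) ^+ 2 <= 1.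
      move: hX; rewrite ler_norml => /andP [ha hb]; rewrite expr2; nra.
    split.
      by rewrite exprMn -[X in _ <= X]mulr1 ler_pM2l ?exprn_gt0.
    rewrite normrM gtr0_norm //.
    have : lam * `|X t - mu f| <= lam * 1 by rewrite ler_pM2l.
    lra.
  have eG : \sum_t G t = expR (- (lam * e)) * \sum_t w t * expR (lam * (X t - mu f)).
    rewrite mulr_sumr; apply: eq_bigr => t _.
    rewrite /G mulrCA -expRD; congr (_ * expR _); ring.
  have hS : \sum_t w t * expR (lam * (X t - mu f)) <= 1 + 2 * lam ^+ 2.
    apply: (le_trans (y := \sum_t w t * (1 + lam * (X t - mu f) + 2 * lam ^+ 2))).
      apply: ler_sum => t _; apply: ler_wpM2l => //.
      have [h1 h2] := hz t.
      apply: (le_trans (expR_le_quad _ h2)); lra.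
    rewrite (eq_bigr (fun t => (1 + 2 * lam ^+ 2 - lam * mu f) * w t + lam * (w t * X t))); last first.
      by move=> t _; ring.
    rewrite big_split /= -!mulr_sumr w1.
    have -> : \sum_t w t * X t = mu f by [].
    by rewrite mulr1 subrK.
  rewrite eG.
  apply: (le_trans (ler_wpM2l (expR_ge0 _) hS)).
  apply: (le_trans (ler_wpM2l (expR_ge0 _) (expR_ge1Dx _))).
  rewrite -expRD ler_expR /lam le_eqVlt; apply/orP; left; apply/eqP.
  by field.
have S0 : 0 <= \sum_t G t by apply: sumr_ge0.
apply: (le_trans step1); rewrite step2.
apply: (le_trans (lerXn2r n _ _ step3)); rewrite ?nnegrE ?expR_ge0 //.
rewrite -expRM_natl le_eqVlt; apply/orP; left; apply/eqP.
by rewrite mulrN mulrA.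
Qed.

Lemma mu_neg f : mu (fun t => ~~ f t) = 1 - mu f.
Proof.
have -> : 1 - mu f = \sum_t w t - mu f by rewrite w1.
rewrite /mu -sumrB; apply: eq_bigr => t _; case: (f t) => /=; rewrite ?mulr1 ?mulr0 ?subrr ?subr0 //.
Qed.

Lemma mean_neg n f s : (0 < n)%N -> mean n (fun t => ~~ f t) s = 1 - mean n f s.
Proof.
move=> n0; rewrite /mean.
rewrite (eq_bigr (fun k => 1 - ((f (s k))%:R : R))); last by move=> k _; case: (f (s k)) => /=; ring.
rewrite sumrB sumr_const card_ord; field.
by rewrite pnatr_eq0 -lt0n.
Qed.

Lemma tail_two n f e : (0 < n)%N -> 0 < e -> e <= 1 ->
  PS n (fun s => ~~ (`|mean n f s - mu f| <= e)) <= 2 * expR (- (n%:R * e ^+ 2 / 8)).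
Proof.
move=> n0 e0 e1.
apply: (le_trans (PS_mono n _ (fun s => (mu f + e < mean n f s) ||
   (mu (fun t => ~~ f t) + e < mean n (fun t => ~~ f t) s)) _)).
  move=> s; rewrite -ltNge ltr_normr mean_neg // mu_neg => /orP [h|h]; apply/orP.
    by left; lra.
  by right; lra.
apply: (le_trans (PS_union _ _ _)).
rewrite mulr2n mulrDl mul1r; apply: lerD; exact: tail_up.
Qed.

End Prob.
Arguments mu {R T} w f.
Arguments mean {R T} n f s.
Arguments PS {R T} w n E.

Section Joint.
Variable R : realType.
Variable L : finType.
Variable J : L -> L -> L -> L -> R.

Definition S y (F : L -> L -> L -> bool) : R :=
  \sum_a \sum_b \sum_c J y a b c * (F a b c)%:R.

Lemma eq_S y F F' : (forall a b c, F a b c = F' a b c) -> S y F = S y F'.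
Proof.
move=> H; apply: eq_bigr => a _; apply: eq_bigr => b _; apply: eq_bigr => c _; by rewrite H.
Qed.

Lemma Pr4_S E : Pr4 J E = \sum_y S y (E y).
Proof.
apply: eq_bigr => y _; apply: eq_bigr => a _; apply: eq_bigr => b _; apply: eq_bigr => c _.
by case: (E y a b c); rewrite ?mulr1 ?mulr0.
Qed.

Lemma Pr4_cond F y0 : Pr4 J (fun y' a b c => F a b c && (y' == y0)) = S y0 F.
Proof.
rewrite Pr4_S (bigD1 y0) //= big1 ?addr0.
  by apply: eq_S => a b c; rewrite eqxx andbT.
move=> z zy; rewrite /S big1 // => a _; rewrite big1 // => b _; rewrite big1 // => c _.
by rewrite (negbTE zy) andbF mulr0.
Qed.

Lemma margY_S y : margY J y = S y (fun _ _ _ => true).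
Proof.
by apply: eq_bigr => a _; apply: eq_bigr => b _; apply: eq_bigr => c _; rewrite mulr1.
Qed.

Lemma sum3 (F : L -> L -> L -> R) :
  \sum_a \sum_b \sum_c F a b c = \sum_(t : L * L * L) F t.1.1 t.1.2 t.2.
Proof.
by rewrite (pair_bigA _ (fun a b => \sum_c F a b c)) /= (pair_bigA _ (fun p c => F p.1 p.2 c)).
Qed.

Lemma mu_obs (h : L * L * L -> bool) :
  mu (obsLaw J) h = \sum_y S y (fun a b c => h (a, b, c)).
Proof.
rewrite /mu /obsLaw.
rewrite (eq_bigr (fun t => \sum_y J y t.1.1 t.1.2 t.2 * (h t)%:R)); last by move=> t _; rewrite mulr_suml.
rewrite exchange_big /=; apply: eq_bigr => y _; rewrite /S sum3.
by apply: eq_bigr => -[[a b] c] _.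
Qed.

Hypothesis pmf : is_pmf4 J.
Hypothesis ci : cond_indep3 J.

Lemma margY_zero y : margY J y = 0 -> forall a b c, J y a b c = 0.
Proof.
case: pmf => J0 _ m0 a b c.
have n1 : forall a, predT a -> 0 <= \sum_b \sum_c J y a b c.
  by move=> a' _; apply: sumr_ge0 => b' _; apply: sumr_ge0.
have h1 := psumr_eq0P n1 m0 (i := a) isT.
have n2 : forall b, predT b -> 0 <= \sum_c J y a b c.
  by move=> b' _; apply: sumr_ge0.
have h2 := psumr_eq0P n2 h1 (i := b) isT.
have n3 : forall c, predT c -> 0 <= J y a b c by [].
exact: (psumr_eq0P n3 h2 (i := c) isT).
Qed.

Lemma S_zero y F : margY J y = 0 -> S y F = 0.
Proof.
move=> m0; rewrite /S big1 // => a _; rewrite big1 // => b _; rewrite big1 // => c _.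
by rewrite margY_zero // mul0r.
Qed.

Lemma dummy_S_ci3 : True. Proof. by []. Qed.

Lemma S_ci3 y (fa fb fc : L -> bool) :
  S y (fun a b c => fa a && fb b && fc c) * margY J y ^+ 2 =
  S y (fun a _ _ => fa a) * S y (fun _ b _ => fb b) * S y (fun _ _ c => fc c).
Proof.
have Ea : S y (fun a _ _ => fa a) = \sum_a margYa J y a * (fa a)%:R.
  apply: eq_bigr => a _; rewrite /margYa mulr_suml; apply: eq_bigr => b _.
  by rewrite mulr_suml.
have Eb : S y (fun _ b _ => fb b) = \sum_b margYb J y b * (fb b)%:R.
  rewrite /S exchange_big /=; apply: eq_bigr => b _; rewrite /margYb mulr_suml; apply: eq_bigr => a _.
  by rewrite mulr_suml.
have Ec : S y (fun _ _ c => fc c) = \sum_c margYc J y c * (fc c)%:R.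
  rewrite /S.
  rewrite (eq_bigr (fun a => \sum_c \sum_b J y a b c * (fc c)%:R)); last first.
    by move=> a _; rewrite exchange_big.
  rewrite exchange_big /=; apply: eq_bigr => c _; rewrite /margYc mulr_suml; apply: eq_bigr => a _.
  by rewrite mulr_suml.
rewrite Ea Eb Ec /S [in LHS]mulr_suml.
rewrite [in RHS]mulr_suml [in RHS]mulr_suml; apply: eq_bigr => a _.
rewrite (mulr_sumr _ _ _ (margYa J y a * (fa a)%:R)) [in LHS]mulr_suml [in RHS]mulr_suml.
apply: eq_bigr => b _.
rewrite [in LHS]mulr_suml [in RHS]mulr_sumr; apply: eq_bigr => c _.
have := ci y a b c => E.
case: (fa a); case: (fb b); case: (fc c) => /=; rewrite ?mulr1 ?mulr0 ?mul0r //.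
Qed.

Lemma cancel_m y (X A B : R) :
  (margY J y = 0 -> X = 0 /\ A = 0) ->
  X * margY J y ^+ 2 = A * B * margY J y -> X * margY J y = A * B.
Proof.
move=> Z E; have [m0|m0] := eqVneq (margY J y) 0.
  by have [-> ->] := Z m0; rewrite !mul0r.
apply: (mulIf m0); by rewrite -mulrA -expr2.
Qed.

Lemma S_ab y (fa fb : L -> bool) F Fa Fb :
  (forall a b c, F a b c = fa a && fb b) -> (forall a b c, Fa a b c = fa a) ->
  (forall a b c, Fb a b c = fb b) ->
  S y F * margY J y = S y Fa * S y Fb.
Proof.
move=> hF hA hB.
have := S_ci3 y fa fb (fun _ => true).
rewrite (eq_S y (fun a b c => fa a && fb b && true) F); last by move=> a b c; rewrite andbT hF.
rewrite (eq_S y (fun a _ _ => fa a) Fa) //.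
rewrite (eq_S y (fun _ b _ => fb b) Fb) //.
rewrite -margY_S; apply: cancel_m => m0; by rewrite !S_zero.
Qed.

Lemma S_ac y (fa fc : L -> bool) F Fa Fc :
  (forall a b c, F a b c = fa a && fc c) -> (forall a b c, Fa a b c = fa a) ->
  (forall a b c, Fc a b c = fc c) ->
  S y F * margY J y = S y Fa * S y Fc.
Proof.
move=> hF hA hC.
have := S_ci3 y fa (fun _ => true) fc.
rewrite (eq_S y (fun a b c => fa a && true && fc c) F); last by move=> a b c; rewrite andbT hF.
rewrite (eq_S y (fun a _ _ => fa a) Fa) //.
rewrite (eq_S y (fun _ _ c => fc c) Fc) //.
rewrite -margY_S [S y Fa * margY J y * S y Fc]mulrAC. apply: cancel_m => m0; by rewrite !S_zero.
Qed.

Lemma S_bc y (fb fc : L -> bool) F Fb Fc :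
  (forall a b c, F a b c = fb b && fc c) -> (forall a b c, Fb a b c = fb b) ->
  (forall a b c, Fc a b c = fc c) ->
  S y F * margY J y = S y Fb * S y Fc.
Proof.
move=> hF hB hC.
have := S_ci3 y (fun _ => true) fb fc.
rewrite (eq_S y (fun a b c => true && fb b && fc c) F); last by move=> a b c; rewrite hF.
rewrite (eq_S y (fun _ b _ => fb b) Fb) //.
rewrite (eq_S y (fun _ _ c => fc c) Fc) //.
rewrite -margY_S => E; apply: cancel_m; first by move=> m0; rewrite !S_zero.
by rewrite E; ring.
Qed.



Lemma margY_total : \sum_z margY J z = 1.
Proof. by case: pmf. Qed.

Lemma sum_two_gen (G : L -> R) y y' : y != y' -> (forall z, z != y -> z != y' -> G z = 0) ->
  \sum_z G z = G y + G y'.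
Proof.
move=> yy' H; rewrite (bigD1 y) //= (bigD1 y') /=; last by rewrite eq_sym.
rewrite big1 ?addr0 // => z /andP [zy zy']; exact: H.
Qed.

End Joint.

Lemma hold3 (R : realType) (V : Type) (close : R -> V -> Prop) (r : R -> R)
  (r_ge0 : forall e, 0 < e -> 0 <= r e) (f1 f2 f3 : V -> R) x1 x2 x3 :
  hold close r f1 x1 -> hold close r f2 x2 -> hold close r f3 x3 ->
  exists K e0, 0 < K /\ 0 < e0 /\ forall e v, 0 < e -> e <= e0 -> close e v ->
    `|f1 v - x1| <= K * r e /\ `|f2 v - x2| <= K * r e /\ `|f3 v - x3| <= K * r e.
Proof.
move=> [K1 [e1 [K10 [e10 H1]]]] [K2 [e2 [K20 [e20 H2]]]] [K3 [e3 [K30 [e30 H3]]]].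
have [m0 [m1 m2]] := min_pos e10 e20.
have [m0' [m1' m2']] := min_pos m0 e30.
exists (K1 + K2 + K3), (Num.min (Num.min e1 e2) e3).
split; first by rewrite !addr_gt0.
split=> // e v he he0 hc.
have hr := r_ge0 _ he.
have h1 := H1 e v he (le_trans he0 (le_trans m1' m1)) hc.
have h2 := H2 e v he (le_trans he0 (le_trans m1' m2)) hc.
have h3 := H3 e v he (le_trans he0 m2') hc.
have k1 : K1 * r e <= (K1 + K2 + K3) * r e by rewrite ler_wpM2r // -addrA lerDl addr_ge0 // ltW.
have k2 : K2 * r e <= (K1 + K2 + K3) * r e.
  by rewrite ler_wpM2r // addrAC lerDr addr_ge0 // ltW.
have k3 : K3 * r e <= (K1 + K2 + K3) * r e by rewrite ler_wpM2r // lerDr addr_ge0 // ltW.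
split; first exact: le_trans h1 k1.
split; first exact: le_trans h2 k2.
exact: le_trans h3 k3.
Qed.

Lemma key_alg (R : realType) (m Xa Xb Za Zb Xab Zab : R) :
  m != 0 -> 1 - m != 0 -> Xab * m = Xa * Xb -> Zab * (1 - m) = Za * Zb ->
  Kfun m (Xab + Zab) (Xa + Za) (Xb + Zb) = (Xa / m - (Xa + Za)) * (Xb / m - (Xb + Zb)).
Proof.
move=> m0 m1 E1 E2.
have -> : Xab = Xa * Xb / m by rewrite -E1 mulfK.
have -> : Zab = Za * Zb / (1 - m) by rewrite -E2 mulfK.
rewrite /Kfun; field.
by rewrite m0 m1.
Qed.

Lemma aux1 (R : realType) (dl x : R) : dl < 1 -> 1 <= x -> dl <= 2 * x.
Proof. move=> *; lra. Qed.
Lemma aux2 (R : realType) (x : R) : x <= 1 -> 3 / 4 * x <= 1.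
Proof. move=> *; lra. Qed.
Lemma aux3 (R : realType) (a b c : R) : a <= b -> b <= c -> 1 - c <= 1 - a.
Proof. move=> *; lra. Qed.

Theorem mainTheorem1
  (R : realType) (L : finType) (d : nat)
  (dist : L -> L -> R) (g : L -> {ffun 'I_d -> bool})
  (J : L -> L -> L -> L -> R) (y1 y2 : L) (p : R)
  (y : L) (sgn : 'I_d -> R) :
  isometric_embedding dist g ->
  is_pmf4 J ->
  y1 != y2 ->
  (forall y', y' != y1 -> y' != y2 -> margY J y' = 0) ->
  p = margY J y1 -> 0 < p < 1 ->
  cond_indep3 J ->
  (y == y1) || (y == y2) ->
  let pp := margY J y in
  let alpha i := condPr4 J (fun _ a _ _ => g a i) (fun y' _ _ _ => y' == y) in
  let beta i := condPr4 J (fun _ _ b _ => g b i) (fun y' _ _ _ => y' == y) in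
  let gamma i := condPr4 J (fun _ _ _ c => g c i) (fun y' _ _ _ => y' == y) in
  let ella i := Pr4 J (fun _ a _ _ => g a i) in
  let ellb i := Pr4 J (fun _ _ b _ => g b i) in
  let ellc i := Pr4 J (fun _ _ _ c => g c i) in
  (* non-degeneracy: each labeling function carries signal on every coordinate *)
  (forall i, alpha i != ella i /\ beta i != ellb i /\ gamma i != ellc i) ->
  (* sign recovery: the root choice is the correct one *)
  (forall i, (sgn i = 1 \/ sgn i = -1) /\ 0 < sgn i * (alpha i - ella i)) ->
  exists C : R, exists t0 : R, 0 < C /\ 0 < t0 /\
    forall (n : nat) (delta : R), (0 < n)%N -> 0 < delta ->
      let t := ln (2 * (d ^ 2)%:R / delta) / (2 * n%:R) in
      t <= t0 ->
      1 - delta <=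
      PrSample J (fun s : {ffun 'I_n -> L * L * L} =>
        [forall i : 'I_d,
          (`|alpha_hat g s pp sgn i - alpha i| <= C * Num.sqrt (Num.sqrt t))
          && (`|beta_hat g s pp sgn i - beta i| <= C * Num.sqrt (Num.sqrt t))
          && (`|gamma_hat g s pp sgn i - gamma i| <= C * Num.sqrt (Num.sqrt t))]).
Proof.
move=> iso pmf y12 others pdef p01 ci yy pp alpha beta gamma ella ellb ellc nondeg sgnh.
pose y' := if y == y1 then y2 else y1.
have ycase : (y = y1 /\ y' = y2) \/ (y = y2 /\ y' = y1).
  rewrite /y'; case: (eqVneq y y1) => [e|ny1]; first by left.
  by right; split=> //; move: yy; rewrite (negbTE ny1) /= => /eqP.
have yy' : y != y'.
  by case: ycase => [[-> ->]|[-> ->]] //; rewrite eq_sym.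
have oth : forall z, z != y -> z != y' -> margY J z = 0.
  move=> z; case: ycase => [[-> ->]|[-> ->]] h1 h2; exact: others.
have msum : margY J y + margY J y' = 1.
  by rewrite -(sum_two_gen _ _ (margY J) y y' yy' oth) margY_total.
have pp01 : 0 < pp < 1.
  rewrite /pp; move: msum; case: ycase => [[-> ->]|[-> ->]] ms; first by rewrite -pdef.
  move: ms; rewrite -pdef => ms; have -> : margY J y2 = 1 - p by rewrite -ms addrK.
  by move: p01 => /andP [h1 h2]; apply/andP; split; lra.
have my' : margY J y' = 1 - pp by rewrite -msum /pp; ring.
have pp0 : pp != 0 by move: pp01 => /andP [h _]; rewrite gt_eqF.
have pp1 : 1 - pp != 0 by move: pp01 => /andP [_ h]; rewrite subr_eq0 eq_sym lt_eqF.
pose w := obsLaw J.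
have w0 : forall t, 0 <= w t.
  by move=> t; apply: sumr_ge0 => z _; case: pmf => H _; apply: H.
have w1 : \sum_t w t = 1.
  rewrite /w /obsLaw exchange_big /= -(margY_total _ _ _ pmf).
  by apply: eq_bigr => z _; rewrite /margY sum3.
pose SS z (h : L * L * L -> bool) := S R L J z (fun a b c => h (a, b, c)).
have muE : forall h, mu w h = SS y h + SS y' h.
  move=> h; rewrite mu_obs.
  apply: (sum_two_gen _ _ (fun z => SS z h) y y' yy') => z zy zy'.
  exact: (S_zero _ _ _ pmf z _ (oth z zy zy')).
have hden : Pr4 J (fun y0 _ _ _ => y0 == y) = pp.
  transitivity (S R L J y (fun _ _ _ => true)); first exact: (Pr4_cond R L J (fun _ _ _ => true) y).
  by rewrite /pp margY_S.
pose fa (i : 'I_d) := fun t : L * L * L => g (pa t) i.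
pose fb (i : 'I_d) := fun t : L * L * L => g (pb t) i.
pose fc (i : 'I_d) := fun t : L * L * L => g (pc t) i.
pose fab (i : 'I_d) := fun t : L * L * L => g (pa t) i && g (pb t) i.
pose fac (i : 'I_d) := fun t : L * L * L => g (pa t) i && g (pc t) i.
pose fbc (i : 'I_d) := fun t : L * L * L => g (pb t) i && g (pc t) i.
have halpha : forall i, alpha i = SS y (fa i) / pp.
  move=> i; rewrite /alpha /condPr4; congr (_ / _); last exact: hden.
  exact: (Pr4_cond R L J (fun a _ _ => g a i) y).
have hbeta : forall i, beta i = SS y (fb i) / pp.
  move=> i; rewrite /beta /condPr4; congr (_ / _); last exact: hden.
  exact: (Pr4_cond R L J (fun _ b _ => g b i) y).
have hgamma : forall i, gamma i = SS y (fc i) / pp.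
  move=> i; rewrite /gamma /condPr4; congr (_ / _); last exact: hden.
  exact: (Pr4_cond R L J (fun _ _ c => g c i) y).
have hella : forall i, ella i = mu w (fa i).
  by move=> i; rewrite mu_obs /ella Pr4_S.
have hellb : forall i, ellb i = mu w (fb i).
  by move=> i; rewrite mu_obs /ellb Pr4_S.
have hellc : forall i, ellc i = mu w (fc i).
  by move=> i; rewrite mu_obs /ellc Pr4_S.
have eab : forall i, Kfun pp (mu w (fab i)) (mu w (fa i)) (mu w (fb i)) =
    (alpha i - mu w (fa i)) * (beta i - mu w (fb i)).
  move=> i; rewrite !muE halpha hbeta; apply: key_alg => //.
    exact: (S_ab _ _ _ pmf ci y (fun a => g a i) (fun b => g b i) _ _ _ (fun _ _ _ => erefl) (fun _ _ _ => erefl) (fun _ _ _ => erefl)).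
  rewrite -my'.
  exact: (S_ab _ _ _ pmf ci y' (fun a => g a i) (fun b => g b i) _ _ _ (fun _ _ _ => erefl) (fun _ _ _ => erefl) (fun _ _ _ => erefl)).
have eac : forall i, Kfun pp (mu w (fac i)) (mu w (fa i)) (mu w (fc i)) =
    (alpha i - mu w (fa i)) * (gamma i - mu w (fc i)).
  move=> i; rewrite !muE halpha hgamma; apply: key_alg => //.
    exact: (S_ac _ _ _ pmf ci y (fun a => g a i) (fun c => g c i) _ _ _ (fun _ _ _ => erefl) (fun _ _ _ => erefl) (fun _ _ _ => erefl)).
  rewrite -my'.
  exact: (S_ac _ _ _ pmf ci y' (fun a => g a i) (fun c => g c i) _ _ _ (fun _ _ _ => erefl) (fun _ _ _ => erefl) (fun _ _ _ => erefl)).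
have ebc : forall i, Kfun pp (mu w (fbc i)) (mu w (fb i)) (mu w (fc i)) =
    (beta i - mu w (fb i)) * (gamma i - mu w (fc i)).
  move=> i; rewrite !muE hbeta hgamma; apply: key_alg => //.
    exact: (S_bc _ _ _ pmf ci y (fun b => g b i) (fun c => g c i) _ _ _ (fun _ _ _ => erefl) (fun _ _ _ => erefl) (fun _ _ _ => erefl)).
  rewrite -my'.
  exact: (S_bc _ _ _ pmf ci y' (fun b => g b i) (fun c => g c i) _ _ _ (fun _ _ _ => erefl) (fun _ _ _ => erefl) (fun _ _ _ => erefl)).
pose V := {n : nat & {ffun 'I_n -> L * L * L}}.
pose fs (i : 'I_d) := [:: fa i; fb i; fc i; fab i; fac i; fbc i].
pose closeb (i : 'I_d) (e : R) (v : V) :=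
  all (fun f => `|mean (projT1 v) f (projT2 v) - mu w f| <= e) (fs i).
have per : forall i : 'I_d, exists Ke : R * R, 0 < Ke.1 /\ 0 < Ke.2 /\
   forall e n (s : {ffun 'I_n -> L * L * L}), 0 < e -> e <= Ke.2 -> closeb i e (existT _ n s) ->
    `|alpha_hat g s pp sgn i - alpha i| <= Ke.1 * Num.sqrt e /\
    `|beta_hat g s pp sgn i - beta i| <= Ke.1 * Num.sqrt e /\
    `|gamma_hat g s pp sgn i - gamma i| <= Ke.1 * Num.sqrt e.
  move=> i.
  have [na [nb nc]] := nondeg i.
  have [hsg hsa] := sgnh i.
  rewrite hella in na hsa; rewrite hellb in nb; rewrite hellc in nc.
  have HC : forall e (v : V), 0 < e -> closeb i e v ->
     `|mean (projT1 v) (fa i) (projT2 v) - mu w (fa i)| <= e /\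
     `|mean (projT1 v) (fb i) (projT2 v) - mu w (fb i)| <= e /\
     `|mean (projT1 v) (fc i) (projT2 v) - mu w (fc i)| <= e /\
     `|mean (projT1 v) (fab i) (projT2 v) - mu w (fab i)| <= e /\
     `|mean (projT1 v) (fac i) (projT2 v) - mu w (fac i)| <= e /\
     `|mean (projT1 v) (fbc i) (projT2 v) - mu w (fbc i)| <= e.
    move=> e v he; rewrite /closeb /=.
    by case/andP => h1 /andP [h2 /andP [h3 /andP [h4 /andP [h5 /andP [h6 _]]]]].
  have D := determ R V (fun e v => closeb i e v) _ _ _ _ _ _ _ _ _ _ _ _ pp (sgn i) (alpha i) (beta i) (gamma i)
     HC (eab i) (eac i) (ebc i) na nb nc hsg hsa.
  case: D => [D1 [D2 D3]].
  have [K [e0 [K0 [e00 H]]]] := hold3 _ _ _ _ (@rsq_ge0 R) _ _ _ _ _ _ D1 D2 D3.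
  exists (K, e0); split=> //; split=> // e n s he he0 hc.
  exact: (H e (existT _ n s) he he0 hc).
have [Ke HKe] := fin_all_exists per.
pose Kmax := 1 + \sum_i (Ke i).1.
pose emin := (1 + \sum_i ((Ke i).2)^-1)^-1.
have Kpos : forall i, 0 < (Ke i).1 by move=> i; case: (HKe i).
have epos : forall i, 0 < (Ke i).2 by move=> i; case: (HKe i) => _ [].
have sK0 : 0 <= \sum_i (Ke i).1 by apply: sumr_ge0 => i _; exact: ltW.
have sE0 : 0 <= \sum_i ((Ke i).2)^-1 by apply: sumr_ge0 => i _; rewrite invr_ge0 ltW.
have Kmax0 : 0 < Kmax by rewrite /Kmax; lra.
have emin0 : 0 < emin by rewrite /emin invr_gt0; lra.
have KiK : forall i, (Ke i).1 <= Kmax.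
  move=> i; rewrite /Kmax (bigD1 i) //=.
  have : 0 <= \sum_(j | j != i) (Ke j).1 by apply: sumr_ge0 => j _; exact: ltW.
  lra.
have eie : forall i, emin <= (Ke i).2.
  move=> i; rewrite /emin -[X in _ <= X](invrK (Ke i).2) lef_pV2 ?posrE ?invr_gt0 //; last lra.
  rewrite (bigD1 i) //=.
  have : 0 <= \sum_(j | j != i) ((Ke j).2)^-1 by apply: sumr_ge0 => j _; rewrite invr_ge0 ltW.
  lra.
pose m := Num.min 1 emin.
have m0 : 0 < m by rewrite /m lt_min ltr01 emin0.
have m1 : m <= 1 by rewrite /m ge_min lexx.
have m2 : m <= emin by rewrite /m ge_min lexx orbT.
exists (3 * Kmax), ((m / 8) ^+ 2).
split; first by rewrite mulr_gt0.
split; first by rewrite exprn_gt0 // divr_gt0.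
move=> n delta n0 d0 t tt0.
have PSeq : forall E, PrSample J E = PS w n E by [].
case: (lerP 1 delta) => hd.
  rewrite PSeq; have := PS_ge0 R _ w w0 n
    (fun s : {ffun 'I_n -> L * L * L} =>
        [forall i : 'I_d,
          (`|alpha_hat g s pp sgn i - alpha i| <= 3 * Kmax * Num.sqrt (Num.sqrt t))
          && (`|beta_hat g s pp sgn i - beta i| <= 3 * Kmax * Num.sqrt (Num.sqrt t))
          && (`|gamma_hat g s pp sgn i - gamma i| <= 3 * Kmax * Num.sqrt (Num.sqrt t))]).
  lra.
pose e := 8 * Num.sqrt t.
have sqt : Num.sqrt t <= m / 8.
  have h : Num.sqrt t <= Num.sqrt ((m / 8) ^+ 2) by rewrite ler_sqrt // exprn_ge0 // divr_ge0 // ltW.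
  have nm : `|m / 8| = m / 8 by rewrite ger0_norm // divr_ge0 // ltW.
  by rewrite sqrtr_sqr nm in h.
have e_le : e <= m by rewrite /e; lra.
have e1 : e <= 1 by lra.
have emi : forall i, e <= (Ke i).2 by move=> i; apply: (le_trans e_le); apply: (le_trans m2).
(* facts valid once some coordinate exists *)
have fromi : forall i : 'I_d, 0 < e /\ (1 <= (d%:R : R)).
  move=> i; have dpos : (0 < d)%N by apply: (leq_ltn_trans (leq0n i)); exact: ltn_ord.
  have D1 : 1 <= (d%:R : R) by rewrite ler1n.
  split=> //.
  have A1 : 1 < 2 * (d ^ 2)%:R / delta.
    rewrite natrX ltr_pdivlMr // mul1r.
    have : 1 <= (d%:R : R) ^+ 2 by rewrite exprn_ege1.
    lra.
  have lnA : 0 < ln (2 * (d ^ 2)%:R / delta) by rewrite ln_gt0.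
  have t0 : 0 < t by rewrite /t divr_gt0 // mulr_gt0 // ltr0n.
  by rewrite /e mulr_gt0 // sqrtr_gt0.
pose G := fun s : {ffun 'I_n -> L * L * L} => [forall i, closeb i e (existT _ n s)].
have sq8 : Num.sqrt 8 <= (3 : R).
  rewrite -[X in _ <= X](@ger0_norm _ 3) // -sqrtr_sqr ler_sqrt; last by rewrite exprn_ge0.
  by rewrite expr2 -natrM ler_nat.
have GE : PS w n G <= PrSample J (fun s : {ffun 'I_n -> L * L * L} =>
        [forall i : 'I_d,
          (`|alpha_hat g s pp sgn i - alpha i| <= 3 * Kmax * Num.sqrt (Num.sqrt t))
          && (`|beta_hat g s pp sgn i - beta i| <= 3 * Kmax * Num.sqrt (Num.sqrt t))
          && (`|gamma_hat g s pp sgn i - gamma i| <= 3 * Kmax * Num.sqrt (Num.sqrt t))]).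
  rewrite PSeq; apply: PS_mono => // s /forallP Gs; apply/forallP => i.
  have [ep _] := fromi i.
  have [_ [_ H]] := HKe i.
  have [h1 [h2 h3]] := H e n s ep (emi i) (Gs i).
  have bnd : (Ke i).1 * Num.sqrt e <= 3 * Kmax * Num.sqrt (Num.sqrt t).
    have s8 : Num.sqrt e = Num.sqrt 8 * Num.sqrt (Num.sqrt t) by rewrite /e sqrtrM.
    have q0 := sqrtr_ge0 (Num.sqrt t).
    have h8 : Num.sqrt 8 * Num.sqrt (Num.sqrt t) <= 3 * Num.sqrt (Num.sqrt t) := ler_pM (sqrtr_ge0 8) q0 sq8 (lexx _).
    have := ler_pM (ltW (Kpos i)) (mulr_ge0 (sqrtr_ge0 _) q0) (KiK i) h8.
    rewrite s8 => h; apply: (le_trans h); by rewrite mulrA [Kmax * 3]mulrC.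
  rewrite (le_trans h1 bnd) (le_trans h2 bnd) (le_trans h3 bnd) //.
have bad : forall i : 'I_d,
    PS w n (fun s => ~~ closeb i e (existT _ n s)) <= delta / d%:R.
  move=> i; have [ep D1] := fromi i.
  have B := PS_all_seq R _ w w0 n _ (fs i) (fun f s => `|mean n f s - mu w f| <= e)
     (2 * expR (- (n%:R * e ^+ 2 / 8)))
     (fun f => tail_two R _ w w0 w1 n f e n0 ep e1).
  apply: (le_trans B) => /=.
  pose A := 2 * (d ^ 2)%:R / delta.
  have Apos : 0 < A by rewrite /A divr_gt0 // mulr_gt0 // ltr0n expn_gt0; case: (d) D1 => //; rewrite ler1n.
  have t0 : 0 <= t.
    rewrite /t divr_ge0 // ?mulr_ge0 // ln_ge0 // /A natrX ler_pdivlMr // mul1r.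
    apply: aux1 => //; by rewrite exprn_ege1.
  have ex : - (n%:R * e ^+ 2 / 8) = - (4%:R * ln A).
    rewrite /e exprMn sqr_sqrtr // /t /A; field.
    by rewrite pnatr_eq0 -lt0n.
  rewrite ex expRN expRM_natl lnK ?posrE //.
  have DA : A ^+ 4 = 16 * (d%:R) ^+ 8 / delta ^+ 4.
    by rewrite /A natrX; field; rewrite gt_eqF.
  rewrite DA.
  have eqA : 6%:R * (2 * (16 * (d%:R : R) ^+ 8 / delta ^+ 4)^-1) =
     (3 / 4 * (delta ^+ 3 / (d%:R) ^+ 7)) * (delta / d%:R).
    by field; rewrite (gt_eqF d0) (gt_eqF (lt_le_trans ltr01 D1)).
  rewrite eqA -[X in _ <= X]mul1r ler_wpM2r //; first by apply: divr_ge0; [exact: ltW | exact: ler0n].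
  have h3 : delta ^+ 3 <= 1 by rewrite exprn_ile1 // ltW.
  have h7 : 1 <= (d%:R : R) ^+ 7 by rewrite exprn_ege1.
  apply: aux2.
  by rewrite ler_pdivrMr ?mul1r ?(lt_le_trans ltr01) // (le_trans h3 h7).
rewrite (le_trans _ GE) // (PS_compl R _ w w1 n G).
have notG : PS w n (fun s => ~~ G s) <= \sum_i PS w n (fun s => ~~ closeb i e (existT _ n s)).
  apply: le_trans (PS_exists R _ w w0 n _ (fun i s => ~~ closeb i e (existT _ n s))).
  by apply: PS_mono => // s; rewrite /G negb_forall.
have sumb : \sum_(i < d) PS w n (fun s => ~~ closeb i e (existT _ n s)) <= delta.
  apply: (le_trans (ler_sum _ (fun i _ => bad i))).
  rewrite sumr_const card_ord.
  have [dz|dnz] := eqVneq d 0%N; first by rewrite dz mulr0n ltW.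
  by rewrite -(mulr_natr (delta / d%:R) d) divfK // pnatr_eq0.
exact: aux3 notG sumb.
Qed.
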